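(* Let $R$ be a principal ideal domain and $p$ a prime element of $R$. The ideal $I = (X^2-p,\ X^3)$ of $R[X]$ has radical $(X,p)$, which is a maximal ideal of $R[X]$; hence $I$ is a primary ideal of $R[X]$ which is not power stable.
   Context: An ideal $I$ of the polynomial ring $R[X]$ over an integral domain $R$ is called power stable if $I^t\cap R = (I\cap R)^t$ for all integers $t\geq 1$. *)

(* Defs.v *)
From HB Require Import structures.
From mathcomp Require Import all_boot all_order all_algebra.
Set Implicit Arguments. Unset Strict Implicit. Unset Printing Implicit Defensive.
Import GRing.Theory.
Local Open Scope ring_scope.

Section Ideals.
Variable T : comNzRingType.

Definition is_ideal (I : T -> Prop) : Prop :=
  I 0 /\ (forall x y, I x -> I y -> I (x + y)) /\ (forall r x, I x -> I (r * x)).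

Definition dvdr (a b : T) : Prop := exists c, b = c * a.

Definition principal_ideal (a : T) : T -> Prop := fun x => dvdr a x.

Definition ideal2 (f g : T) : T -> Prop :=
  fun h => exists a b, h = a * f + b * g.

Definition ideal_mul (J K : T -> Prop) : T -> Prop :=
  fun h => exists n (a b : 'I_n -> T),
    (forall i, J (a i)) /\ (forall i, K (b i)) /\ h = \sum_(i < n) a i * b i.

Fixpoint ideal_pow (I : T -> Prop) (t : nat) : T -> Prop :=
  match t with
  | 0%N => fun _ => True
  | t'.+1 => ideal_mul (ideal_pow I t') I
  end.

Definition radical (I : T -> Prop) : T -> Prop := fun x => exists n, I (x ^+ n).

Definition maximal_ideal (M : T -> Prop) : Prop :=
  is_ideal M /\ ~ M 1 /\
  (forall J, is_ideal J -> (forall x, M x -> J x) -> J 1 \/ (forall x, J x <-> M x)).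

Definition primary_ideal (I : T -> Prop) : Prop :=
  is_ideal I /\ ~ I 1 /\
  (forall a b, I (a * b) -> I a \/ exists n, I (b ^+ n)).

End Ideals.

Definition is_PID (R : idomainType) : Prop :=
  forall I : R -> Prop, is_ideal I -> exists a, forall x, I x <-> principal_ideal a x.

Definition prime_elem (R : idomainType) (p : R) : Prop :=
  p != 0 /\ p \isn't a GRing.unit /\
  (forall a b, dvdr p (a * b) -> dvdr p a \/ dvdr p b).

(* contraction I ∩ R of an ideal of R[X] *)
Definition contract (R : idomainType) (I : {poly R} -> Prop) : R -> Prop :=
  fun r => I r%:P.

Definition power_stable (R : idomainType) (I : {poly R} -> Prop) : Prop :=
  forall t : nat, (1 <= t)%N ->
    forall r : R, contract (ideal_pow I t) r <-> ideal_pow (contract I) t r.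

(* Main.v *)
Require Import Defs.
From HB Require Import structures.
From mathcomp Require Import all_boot all_order all_algebra.
From Stdlib Require Import Ring Classical.
Import GRing.Theory.
Local Open Scope ring_scope.

Section Main.
Set Implicit Arguments.
Variable R : idomainType.

Definition PT := {poly R}.
Definition addT (x y : PT) : PT := x + y.
Definition mulT (x y : PT) : PT := x * y.
Definition oppT (x : PT) : PT := - x.
Definition subT (x y : PT) : PT := x - y.
Definition zeroT : PT := 0.
Definition oneT : PT := 1.
Lemma Tth : @ring_theory PT zeroT oneT addT mulT subT oppT eq.
Proof. rewrite /addT /mulT /oppT /subT /zeroT /oneT.
constructor=> //=; [exact: add0r|exact: addrC|exact: addrA|exact: mul1r|exact: mulrC|exact: mulrA|exact: mulrDl|exact: subrr]. Qed.
Add Ring Tr : Tth.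
Lemma addTE (x y : PT) : x + y = addT x y. Proof. by []. Qed.
Lemma mulTE (x y : PT) : x * y = mulT x y. Proof. by []. Qed.
Lemma oppTE (x : PT) : - x = oppT x. Proof. by []. Qed.
Lemma oneTE : 1 = oneT :> PT. Proof. by []. Qed.
Lemma zeroTE : 0 = zeroT :> PT. Proof. by []. Qed.
Definition XT : PT := 'X.
Definition CT (c : R) : PT := c%:P.
Lemma XTE : 'X = XT. Proof. by []. Qed.
Lemma CTE c : c%:P = CT c. Proof. by []. Qed.
Lemma wrapT (x y : PT) : addT x zeroT = addT y zeroT -> x = y.
Proof. by rewrite /addT /zeroT !addr0. Qed.
Ltac gring := apply: wrapT; rewrite ?exprS ?expr0 ?XTE ?CTE ?addTE ?mulTE ?oppTE ?oneTE ?zeroTE;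
  match goal with |- ?a = ?b => change (@eq PT a b) end; ring.

Definition RT := GRing.IntegralDomain.sort R.
Definition addR (x y : RT) : RT := x + y.
Definition mulR (x y : RT) : RT := x * y.
Definition oppR (x : RT) : RT := - x.
Definition subR (x y : RT) : RT := x - y.
Definition zeroR : RT := 0.
Definition oneR : RT := 1.
Lemma Rth : @ring_theory RT zeroR oneR addR mulR subR oppR eq.
Proof. rewrite /addR /mulR /oppR /subR /zeroR /oneR.
constructor=> //=; [exact: add0r|exact: addrC|exact: addrA|exact: mul1r|exact: mulrC|exact: mulrA|exact: mulrDl|exact: subrr]. Qed.
Add Ring Rr : Rth.
Lemma addRE (x y : RT) : x + y = addR x y. Proof. by []. Qed.
Lemma mulRE (x y : RT) : x * y = mulR x y. Proof. by []. Qed.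
Lemma oppRE (x : RT) : - x = oppR x. Proof. by []. Qed.
Lemma oneRE : 1 = oneR :> RT. Proof. by []. Qed.
Lemma zeroRE : 0 = zeroR :> RT. Proof. by []. Qed.
Lemma wrapR (x y : RT) : addR x zeroR = addR y zeroR -> x = y.
Proof. by rewrite /addR /zeroR !addr0. Qed.
Ltac rring := apply: wrapR; rewrite ?exprS ?expr0 ?addRE ?mulRE ?oppRE ?oneRE ?zeroRE;
  match goal with |- ?a = ?b => change (@eq RT a b) end; ring.

Variable p : R.
Hypothesis hp : prime_elem p.
Hypothesis hR : is_PID R.

Definition Is : {poly R} -> Prop := ideal2 ('X^2 - p%:P) ('X^3 : {poly R}).
Definition Ms : {poly R} -> Prop := ideal2 ('X : {poly R}) p%:P.

Lemma not_dvd1 : ~ dvdr p 1.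
Proof.
case=> c Hc; case: hp => _ [/negP hu _]; apply: hu.
apply/unitrPr; exists c; by rewrite mulrC -Hc.
Qed.

Lemma dvd_exp x n : dvdr p (x ^+ n) -> dvdr p x.
Proof.
elim: n => [|n IH]; first by rewrite expr0 => /not_dvd1.
rewrite exprS => /(hp.2.2) [] //.
Qed.

Lemma M_ev f : Ms f <-> dvdr p f.[0].
Proof.
split.
  by case=> a [b ->]; exists b.[0]; rewrite !hornerE.
case=> c Hc.
have /factor_theorem [q Hq] : root (f - (f.[0])%:P) 0.
  by rewrite /root !hornerE subrr.
exists q, c%:P.
rewrite -polyCM -Hc.
rewrite subr0 in Hq.
by rewrite -Hq subrK.
Qed.

Lemma I_M f : Is f -> Ms f.
Proof.
case=> a [b ->]; exists (a * 'X + b * 'X^2), (- a).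
rewrite !exprS !expr0; gring.
Qed.

Lemma I_add f g : Is f -> Is g -> Is (f + g).
Proof.
case=> a [b ->] [c [d ->]]; exists (a + c), (b + d); gring.
Qed.

Lemma I_mul r f : Is f -> Is (r * f).
Proof.
case=> a [b ->]; exists (r * a), (r * b); gring.
Qed.

Lemma M_add f g : Ms f -> Ms g -> Ms (f + g).
Proof.
case=> a [b ->] [c [d ->]]; exists (a + c), (b + d); gring.
Qed.

Lemma M_mul r f : Ms f -> Ms (r * f).
Proof.
case=> a [b ->]; exists (r * a), (r * b); gring.
Qed.

Lemma M4 f : Ms f -> Is (f ^+ 4).
Proof.
case=> a [b ->].
pose P := p%:P.
pose S := (1+1+1+1+1+1) * a*a*b*b*'X*'X + (1+1+1+1)*a*b*b*b*'X*P + b*b*b*b*P*P.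
exists (- ('X * 'X + P) * S), (a*a*a*a*'X + (1+1+1+1)*a*a*a*b*P + 'X * S).
rewrite /S /P !exprS !expr0; gring.
Qed.

Lemma notM_inv b : ~ Ms b -> exists m r, Ms m /\ 1 = m + r * b.
Proof.
move=> nb.
pose c := b.[0].
have nc : ~ dvdr p c by move=> H; apply: nb; apply/M_ev.
pose K := fun x : R => exists u v, x = u * p + v * c.
have iK : is_ideal K.
  split; first by exists 0, 0; rring.
  split.
    move=> x y [u1 [v1 ->]] [u2 [v2 ->]]; exists (u1 + u2), (v1 + v2); rring.
  move=> r x [u1 [v1 ->]]; exists (r * u1), (r * v1); rring.
have [d Hd] := hR iK.
have [u [v Hduv]] : K d by apply/Hd; exists 1; rewrite mul1r.
have [e He] : dvdr d p by apply/Hd; exists 1, 0; rring.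
have [g Hg] : dvdr d c by apply/Hd; exists 0, 1; rring.
have [U [V HUV]] : exists U V, 1 = U * p + V * c.
  have : dvdr p (e * d) by exists 1; rewrite -He mul1r.
  case/(hp.2.2) => [[k Hk]|[k Hk]].
    have Hkd : k * d = 1.
      have : p * (1 - k * d) = 0.
        have -> : p * (1 - k * d) = p - e * d by rewrite Hk; rring.
        by rewrite -He subrr.
      move/eqP; rewrite mulf_eq0 => /orP [/eqP p0|].
        by move: hp.1; rewrite p0 eqxx.
      by rewrite subr_eq0 => /eqP <-.
    exists (k * u), (k * v); rewrite -Hkd Hduv; rring.
  exfalso; apply: nc; exists (g * k); rewrite Hg Hk; rring.
have /factor_theorem [q Hq] : root (b - c%:P) 0 by rewrite /root !hornerE subrr.
rewrite subr0 in Hq.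
exists (U%:P * p%:P - V%:P * q * 'X), V%:P; split.
  exists (- V%:P * q), U%:P; gring.
have -> : (1 : {poly R}) = (U * p + V * c)%:P by rewrite -HUV.
rewrite polyCD !polyCM.
have -> : b = q * 'X + c%:P by rewrite -Hq subrK.
gring.
Qed.

Lemma contract_dvd r : Is r%:P -> dvdr (p * p) r.
Proof.
case=> a [b H].
have E : r%:P = a * 'X^2 - a * p%:P + b * 'X^3 by rewrite H; gring.
have E0 := congr1 (fun q : {poly R} => q`_0) E.
have E2 := congr1 (fun q : {poly R} => q`_2) E.
rewrite /= !coefD !coefN coefMXn coefMC coefMXn coefC /= in E0.
rewrite /= !coefD !coefN coefMXn coefMC coefMXn coefC /= in E2.
exists (- a`_2).
rewrite subnn in E2.
rewrite E0.
have -> : a`_0 = a`_2 * p by apply/eqP; rewrite -subr_eq0 -[_ - _]addr0 -E2.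
rring.
Qed.

Lemma radI f : radical Is f <-> Ms f.
Proof.
split.
  case=> n Hn; have := I_M Hn => /M_ev; rewrite horner_exp => /dvd_exp H.
  by apply/M_ev.
by move=> H; exists 4%N; exact: M4.
Qed.

Lemma not_M1 : ~ Ms 1.
Proof. by move/M_ev; rewrite hornerE => /not_dvd1. Qed.

Lemma maxM : maximal_ideal Ms.
Proof.
split.
  split; first by exists 0, 0; gring.
  by split; [move=> x y; exact: M_add | move=> r x; exact: M_mul].
split; first exact: not_M1.
move=> J iJ sub.
case: (classic (J 1)) => [h|nJ1]; [by left|right].
move=> x; split; last exact: sub.
move=> Jx; case: (classic (Ms x)) => // nx.
exfalso; apply: nJ1.
have [m [r [Mm ->]]] := notM_inv nx.
case: iJ => _ [Jadd Jmul].
by apply: Jadd; [exact: sub|exact: Jmul].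
Qed.

Lemma primI : primary_ideal Is.
Proof.
split.
  split; first by exists 0, 0; gring.
  by split; [move=> x y; exact: I_add | move=> r x; exact: I_mul].
split; first by move/I_M; exact: not_M1.
move=> a b Hab.
case: (classic (Ms b)) => [Mb|nb]; first by right; exists 4%N; exact: M4.
left; have [m [r [Mm H1]]] := notM_inv nb.
have E : a * (m + r * b) ^+ 4 = a * m ^+ 4 + (r * ((1+1+1+1)* m* m* m + (1+1+1+1+1+1)* m* m*(r*b) + (1+1+1+1)* m*(r*b)*(r*b) + (r*b)*(r*b)*(r*b))) * (a * b) by gring.
rewrite -H1 expr1n mulr1 in E.
rewrite E.
by apply: I_add; [apply: I_mul; exact: M4 | exact: I_mul].
Qed.

Lemma dvd_sum (d : R) n (F : 'I_n -> R) : (forall i, dvdr d (F i)) -> dvdr d (\sum_(i < n) F i).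
Proof.
move=> H; apply: (big_ind (dvdr d)).
- by exists 0; rewrite mul0r.
- by move=> x y [c ->] [e ->]; exists (c + e); rewrite mulrDl.
- by move=> i _; exact: H.
Qed.

Lemma dvd_mul2 (d e x y : R) : dvdr d x -> dvdr e y -> dvdr (d * e) (x * y).
Proof. by move=> [c ->] [f ->]; exists (c * f); rring. Qed.

Lemma one_mul (J : {poly R} -> Prop) x : J x -> ideal_mul (fun _ => True) J x.
Proof.
move=> Jx; exists 1%N, (fun _ => 1), (fun _ => x); split => //; split => //.
by rewrite big_ord1 mul1r.
Qed.

Lemma notPS : ~ power_stable Is.
Proof.
move=> hps; have [H _] := hps 2%N isT (p ^+ 3).
have : contract (ideal_pow Is 2) (p ^+ 3).
  rewrite /contract /=.
  pose X3 : {poly R} := 'X^3.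
  pose u : {poly R} := 'X^2 - p%:P.
  exists 3%N, (fun i : 'I_3 => nth 0 [:: X3; -(1+1+1)*'X*X3; ((1+1)*'X^2+p%:P)*u] i),
     (fun i : 'I_3 => nth 0 [:: X3; u; u] i).
  have IX3 : Is X3 by exists 0, 1; rewrite /X3; gring.
  have Iu : Is u by exists 1, 0; rewrite /u; gring.
  split.
    case=> [[|[|[|k]]] Hi] //=; apply: one_mul => //; exact: I_mul.
  split.
    by case=> [[|[|[|k]]] Hi] //=.
  rewrite !big_ord_recr big_ord0 /= !exprS expr0 mulr1 !polyCM /X3 /u; gring.
move/H => [n [a [b [Ha [Hb E]]]]].
have : dvdr ((p * p) * (p * p)) (p ^+ 3).
  rewrite E; apply: dvd_sum => i; apply: dvd_mul2; last by apply: contract_dvd; apply: Hb.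
  have [n' [a' [b' [_ [Hb' ->]]]]] := Ha i.
  apply: dvd_sum => j.
  have [c' ->] : dvdr (p * p) (b' j) by apply: contract_dvd; apply: Hb'.
  by exists (a' j * c'); rring.
case=> c Hc.
have : p * p * p * (1 - c * p) = 0.
  have -> : p * p * p * (1 - c * p) = p ^+ 3 - c * (p * p * (p * p)) by rring.
  by rewrite -Hc subrr.
move/eqP; rewrite !mulf_eq0 (negbTE hp.1) /= subr_eq0 => /eqP h.
by apply: not_dvd1; exists c.
Qed.
Unset Implicit Arguments.
End Main.

Theorem mainTheorem19 (R : idomainType) (hR : is_PID R) (p : R) (hp : prime_elem p) :
  let I := ideal2 ('X^2 - p%:P) ('X^3 : {poly R}) in
  let M := ideal2 ('X : {poly R}) p%:P in
  (forall f, radical I f <-> M f) /\ maximal_ideal M /\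
  primary_ideal I /\ ~ power_stable I.
Proof.
move=> I M.
split; first exact: (radI hp).
split; first exact: (maxM hp hR).
split; first exact: (primI hp hR).
exact: (notPS hp).
Qed.
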